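(* Let $G=(V,E)$ be a connected finite directed graph and $\nu$ a measure on $E$ with $\nu(e)>0$ for all $e\in E$. Let $|||\cdot|||$ be a seminorm on $\mathbb{R}^V$ with $|||\mathsf 1_V|||=0$ and let $C\in[0,\infty)$. If $|||\mathsf 1_A|||\le C\|\mathsf 1_A\|_{W^{1,1}(\nu)}$ for all simply connected sets $A\subseteq V$, then $|||f|||\le C\|f\|_{W^{1,1}(\nu)}$ for all $f:V\to\mathbb{R}$.
   Context: For $f:V\to\mathbb{R}$, $\|f\|_{W^{1,1}(\nu)}=\sum_{uv\in E}|f(v)-f(u)|\,\nu(uv)$. A set $A\subseteq V$ is simply connected if both $A$ and its complement $A^c=V\setminus A$ induce connected subgraphs (of the underlying undirected graph). $\mathsf 1_A$ is the indicator function of $A$. *)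

(* Defs.v *)
From mathcomp Require Import all_boot all_order all_algebra.
Set Implicit Arguments. Unset Strict Implicit. Unset Printing Implicit Defensive.
Import Order.TTheory GRing.Theory Num.Theory.
Local Open Scope ring_scope.

Definition uadj (V : finType) (e : rel V) : rel V := fun x y => e x y || e y x.

Definition induces_connected (V : finType) (e : rel V) (A : {set V}) : Prop :=
  forall x y, x \in A -> y \in A ->
    connect (fun u v => [&& u \in A, v \in A & uadj e u v]) x y.

Definition graph_connected (V : finType) (e : rel V) : Prop :=
  induces_connected e [set: V].

Definition simply_connected (V : finType) (e : rel V) (A : {set V}) : Prop :=
  induces_connected e A /\ induces_connected e (~: A).

Definition W11norm (R : realFieldType) (V : finType) (e : rel V)
  (nu : V -> V -> R) (f : V -> R) : R :=
  \sum_(p : V * V | e p.1 p.2) `|f p.2 - f p.1| * nu p.1 p.2.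

Definition indicator (R : realFieldType) (V : finType) (A : {set V}) : V -> R :=
  fun x => if x \in A then 1 else 0.

Definition seminorm (R : realFieldType) (V : finType) (N : (V -> R) -> R) : Prop :=
  (forall f g : V -> R, N (fun x => f x + g x) <= N f + N g) /\
  (forall (c : R) (f : V -> R), N (fun x => c * f x) = `|c| * N f).

(* Main.v *)
Require Import Defs.
From mathcomp Require Import all_boot all_order all_algebra.
From mathcomp Require Import ring lra.
From Stdlib Require Import Classical FunctionalExtensionality.
Set Implicit Arguments. Unset Strict Implicit. Unset Printing Implicit Defensive.
Import Order.TTheory GRing.Theory Num.Theory.
Local Open Scope ring_scope.

Definition rr (V : finType) (e : rel V) (B : {set V}) : rel V :=
  fun u v => [&& u \in B, v \in B & uadj e u v].

Lemma rr_sym (V : finType) (e : rel V) (B : {set V}) : symmetric (rr e B).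
Proof.
move=> u v; rewrite /rr /uadj; case: (u \in B); case: (v \in B) => //=; exact: orbC.
Qed.

Lemma connU (V : finType) (e : rel V) (A S : {set V}) a0 :
  graph_connected e -> induces_connected e A -> a0 \in A ->
  S \subset ~: A ->
  (forall u v, u \in S -> v \in ~: A -> v \notin S -> ~~ uadj e u v) ->
  induces_connected e (A :|: S).
Proof.
move=> Gc Ac a0A SA Sclosed.
have sub : forall u v, connect (rr e A) u v -> connect (rr e (A :|: S)) u v.
  apply: connect_sub => u v /and3P [uA vA uv]; apply: connect1.
  by rewrite /rr !inE uA vA uv.
suff H : forall z, z \in A :|: S -> connect (rr e (A :|: S)) z a0.
  move=> x y xB yB; apply: (connect_trans (H x xB)).
  by rewrite (sym_connect_sym (rr_sym e (A :|: S))); apply: H.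
move=> z zB.
have := Gc z a0 (in_setT z) (in_setT a0).
case/connectP => p; elim: p z zB => [|y p IH] z zB /=.
  by move=> _ ->; apply: connect0.
case/andP => /and3P [_ _ zy] pth lst.
case/setUP: (zB) => [zA|zS].
  by apply: sub; apply: Ac.
have yB : y \in A :|: S.
  rewrite inE; case yA: (y \in A) => //=.
  apply: contraT => yS; move: (Sclosed z y zS); rewrite inE yA => /(_ isT yS).
  by rewrite zy.
apply: (connect_trans _ (IH y yB pth lst)).
by apply: connect1; rewrite /rr zB yB zy.
Qed.

Lemma comp_closed (V : finType) (e : rel V) (B : {set V}) x u v :
  u \in [set z in B | connect (rr e B) x z] -> v \in B ->
  v \notin [set z in B | connect (rr e B) x z] -> ~~ uadj e u v.
Proof.
rewrite !inE => /andP [uB xu] vB; apply: contra => uv.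
rewrite vB /=; apply: (connect_trans xu); apply: connect1.
by rewrite /rr uB vB uv.
Qed.

Lemma W_split (R : realFieldType) (V : finType) (e : rel V) (nu : V -> V -> R)
  (f g h : V -> R) c :
  (forall u v, e u v -> `|f v - f u| = `|g v - g u| + c * `|h v - h u|) ->
  W11norm e nu f = W11norm e nu g + c * W11norm e nu h.
Proof.
move=> H; rewrite /W11norm mulr_sumr -big_split /=.
by apply: eq_bigr => p hp; rewrite H // mulrDl mulrA.
Qed.

Lemma W_ge0 (R : realFieldType) (V : finType) (e : rel V) (nu : V -> V -> R) f :
  (forall u v, e u v -> 0 < nu u v) -> 0 <= W11norm e nu f.
Proof.
move=> Hnu; apply: sumr_ge0 => p hp; apply: mulr_ge0 => //; exact: ltW (Hnu _ _ hp).
Qed.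

Lemma indE (R : realFieldType) (V : finType) (A : {set V}) x :
  indicator R A x = (x \in A)%:R.
Proof. by rewrite /indicator; case: (x \in A). Qed.

Lemma absb (R : realFieldType) (a b : bool) : `|(a%:R : R) - b%:R| = (a != b)%:R.
Proof.
by case: a; case: b; rewrite /= ?subrr ?normr0 ?subr0 ?sub0r ?normrN ?normr1.
Qed.

Lemma conn_case (R : realFieldType) (V : finType) (e : rel V)
  (nu : V -> V -> R) (N : (V -> R) -> R) (C : R) (n : nat) :
  graph_connected e -> seminorm N ->
  N (indicator R [set: V]) = 0 ->
  (forall A : {set V}, simply_connected e A ->
     N (indicator R A) <= C * W11norm e nu (indicator R A)) ->
  forall A : {set V}, (#|~: A| <= n)%N -> induces_connected e A ->
  N (indicator R A) <= C * W11norm e nu (indicator R A).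
Proof.
move=> Gc [Hadd Hhom] N1 Hsc.
elim: n => [|n IH] A cA Ac.
  apply: Hsc; split=> // x y; move: cA; rewrite leqn0 => /eqP/cards0_eq ->.
  by rewrite in_set0.
case: (classic (induces_connected e (~: A))) => [cAc|nAc]; first by apply: Hsc.
have [x [y [xA yA nxy]]] : exists x y,
    [/\ x \in ~: A, y \in ~: A & ~ connect (rr e (~: A)) x y].
  apply: NNPP => H; apply: nAc => x y xA yA; apply: NNPP => nc; apply: H.
  by exists x, y; split.
have [a0 a0A] : exists a0, a0 \in A.
  case: (set_0Vmem A) => [A0|[a aA]]; last by exists a.
  by exfalso; apply: nAc; rewrite A0 setC0; exact: Gc.
pose D1 := [set z in ~: A | connect (rr e (~: A)) x z].
pose D2 := ~: A :\: D1.
have cl1 : forall u v, u \in D1 -> v \in ~: A -> v \notin D1 -> ~~ uadj e u v.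
  by move=> u v; apply: comp_closed.
have cl2 : forall u v, u \in D2 -> v \in ~: A -> v \notin D2 -> ~~ uadj e u v.
  move=> u v uD2 vA vD2.
  have vD1 : v \in D1 by move: vD2; rewrite /D2 in_setD vA andbT negbK.
  have uA : u \in ~: A by move: uD2; rewrite /D2 in_setD => /andP [].
  have uD1 : u \notin D1 by move: uD2; rewrite /D2 in_setD => /andP [].
  have := cl1 v u vD1 uA uD1.
  by move=> h; rewrite /uadj orbC.
have sub1 : D1 \subset ~: A by apply/subsetP => z; rewrite /D1 inE => /andP [].
have sub2 : D2 \subset ~: A by apply/subsetP => z; rewrite /D2 in_setD => /andP [].
have cU1 := connU Gc Ac a0A sub1 cl1.
have cU2 := connU Gc Ac a0A sub2 cl2.
have xD1 : x \in D1 by rewrite /D1 inE xA connect0.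
have yD2 : y \in D2.
  by rewrite /D2 in_setD yA andbT /D1 inE yA /=; apply/negP.
have lt1 : (#|~: (A :|: D1)| < #|~: A|)%N.
  apply: proper_card; apply/properP; split; first by rewrite setCS subsetUl.
  by exists x => //; rewrite in_setC in_setU xD1 orbT.
have lt2 : (#|~: (A :|: D2)| < #|~: A|)%N.
  apply: proper_card; apply/properP; split; first by rewrite setCS subsetUl.
  by exists y => //; rewrite in_setC in_setU yD2 orbT.
have IH1 := IH _ (leq_trans lt1 cA) cU1.
have IH2 := IH _ (leq_trans lt2 cA) cU2.
have HW : W11norm e nu (indicator R A) =
    W11norm e nu (indicator R (A :|: D1)) + 1 * W11norm e nu (indicator R (A :|: D2)).
  apply: W_split => u v euv.
  have uv : uadj e u v by rewrite /uadj euv.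
  have vu : uadj e v u by rewrite /uadj euv orbT.
  have c1 : ~~ [&& u \in D1, v \notin A & v \notin D1].
    apply/negP => /and3P [a b c]; move: (cl1 u v a); rewrite in_setC => /(_ b c).
    by rewrite uv.
  have c2 : ~~ [&& v \in D1, u \notin A & u \notin D1].
    apply/negP => /and3P [a b c]; move: (cl1 v u a); rewrite in_setC => /(_ b c).
    by rewrite vu.
  have s1 : u \in D1 -> u \notin A by move/(subsetP sub1); rewrite in_setC.
  have s2 : v \in D1 -> v \notin A by move/(subsetP sub1); rewrite in_setC.
  rewrite !indE !absb /D2 !in_setU !in_setD !in_setC mul1r -natrD.
  move: c1 c2 s1 s2; case: (u \in A); case: (v \in A); case: (u \in D1);
    case: (v \in D1) => //=.
have Hf : indicator R A = (fun z => (indicator R (A :|: D1) z + indicator R (A :|: D2) z)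
                                    + (-1) * indicator R [set: V] z).
  apply: functional_extensionality => z.
  rewrite !indE in_setT /D2 !in_setU in_setD in_setC.
  case: (z \in A); case: (z \in D1) => /=; lra.
rewrite HW Hf; apply: le_trans (Hadd _ _) _.
rewrite (Hhom (-1) (indicator R [set: V])) N1 mulr0 addr0.
apply: le_trans (Hadd _ _) _.
by rewrite mulrDr mul1r; apply: lerD.
Qed.

Lemma set_case (R : realFieldType) (V : finType) (e : rel V)
  (nu : V -> V -> R) (N : (V -> R) -> R) (C : R) (n : nat) :
  graph_connected e -> seminorm N ->
  N (indicator R [set: V]) = 0 ->
  (forall A : {set V}, simply_connected e A ->
     N (indicator R A) <= C * W11norm e nu (indicator R A)) ->
  forall A : {set V}, (#|A| <= n)%N ->
  N (indicator R A) <= C * W11norm e nu (indicator R A).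
Proof.
move=> Gc Hs N1 Hsc; have [Hadd Hhom] := Hs.
elim: n => [|n IH] A cA;
  (case: (classic (induces_connected e A)) => [Ac|nAc];
    first exact: (conn_case (n := #|~: A|) Gc Hs N1 Hsc (leqnn _) Ac));
  (have [x [y [xA yA nxy]]] : exists x y,
    [/\ x \in A, y \in A & ~ connect (rr e A) x y] by
  apply: NNPP => H; apply: nAc => x y xA yA; apply: NNPP => nc; apply: H;
  by exists x, y; split).
  by move: cA; rewrite leqn0 => /eqP/cards0_eq A0; rewrite A0 in_set0 in xA.
pose A1 := [set z in A | connect (rr e A) x z].
pose A2 := A :\: A1.
have cl1 : forall u v, u \in A1 -> v \in A -> v \notin A1 -> ~~ uadj e u v.
  by move=> u v; apply: comp_closed.
have sub1 : A1 \subset A by apply/subsetP => z; rewrite /A1 inE => /andP [].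
have xA1 : x \in A1 by rewrite /A1 inE xA connect0.
have yA1 : y \notin A1 by rewrite /A1 inE yA /=; apply/negP.
have lt1 : (#|A1| < #|A|)%N.
  by apply: proper_card; apply/properP; split => //; exists y.
have lt2 : (#|A2| < #|A|)%N.
  apply: proper_card; apply/properP; split; first by rewrite /A2 subsetDl.
  by exists x => //; rewrite /A2 in_setD xA1.
have IH1 := IH _ (leq_trans lt1 cA).
have IH2 := IH _ (leq_trans lt2 cA).
have HW : W11norm e nu (indicator R A) =
    W11norm e nu (indicator R A1) + 1 * W11norm e nu (indicator R A2).
  apply: W_split => u v euv.
  have uv : uadj e u v by rewrite /uadj euv.
  have vu : uadj e v u by rewrite /uadj euv orbT.
  have c1 : ~~ [&& u \in A1, v \in A & v \notin A1].
    apply/negP => /and3P [a b c]; move: (cl1 u v a b c).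
    by rewrite uv.
  have c2 : ~~ [&& v \in A1, u \in A & u \notin A1].
    apply/negP => /and3P [a b c]; move: (cl1 v u a b c).
    by rewrite vu.
  have s1 : (u \in A1) ==> (u \in A) by apply/implyP => /(subsetP sub1).
  have s2 : (v \in A1) ==> (v \in A) by apply/implyP => /(subsetP sub1).
  rewrite !indE !absb /A2 !in_setD mul1r -natrD.
  move: c1 c2 s1 s2; case: (u \in A); case: (v \in A); case: (u \in A1);
    case: (v \in A1) => //=.
have Hf : indicator R A = (fun z => indicator R A1 z + indicator R A2 z).
  apply: functional_extensionality => z.
  rewrite !indE /A2 in_setD.
  case zA1: (z \in A1).
    have zA : z \in A by apply: (subsetP sub1).
    by rewrite zA /=; lra.
  by case: (z \in A) => /=; lra.
rewrite HW Hf; apply: le_trans (Hadd _ _) _.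
by rewrite mulrDr mul1r; apply: lerD.
Qed.

Lemma func_case (R : realFieldType) (V : finType) (e : rel V)
  (nu : V -> V -> R) (N : (V -> R) -> R) (C : R) (n : nat) :
  (forall u v, e u v -> 0 < nu u v) -> seminorm N ->
  N (indicator R [set: V]) = 0 -> 0 <= C ->
  (forall A : {set V}, N (indicator R A) <= C * W11norm e nu (indicator R A)) ->
  forall (f : V -> R) (m : R), (forall x, m <= f x) ->
  (#|[set x : V | (m < f x)%R]| <= n)%N -> N f <= C * W11norm e nu f.
Proof.
move=> Hnu Hs N1 C0 Hset; have [Hadd Hhom] := Hs.
elim: n => [|n IH] f m fm cf;
  (case: (set_0Vmem [set x : V | (m < f x)%R]) => [A0|[x0 x0A]];
  [ have -> : f = (fun x => m * indicator R [set: V] x);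
     [ apply: functional_extensionality => z;
       (have : z \notin [set x : V | (m < f x)%R] by rewrite A0 in_set0);
       rewrite inE -leNgt => h1; have h2 := fm z;
       by rewrite indE in_setT mulr1; apply: le_anti; rewrite h1 h2
     | by rewrite Hhom N1 mulr0; apply: mulr_ge0 => //; apply: W_ge0 ]
  | ]).
  by move: cf; rewrite leqn0 => /eqP/cards0_eq A0; rewrite A0 in_set0 in x0A.
set A := [set x : V | (m < f x)%R] in cf x0A *.
case: (@arg_minP _ _ _ x0 (fun z => z \in A) f x0A) => x1 x1A Hmin.
have mx1 : m < f x1 by move: x1A; rewrite inE.
pose c := f x1 - m.
have c0 : 0 <= c by rewrite subr_ge0 ltW.
pose g := fun z => f z - c * indicator R A z.
have notA : forall z, z \notin A -> f z = m.
  move=> z; rewrite inE -leNgt => h; apply: le_anti; rewrite h fm.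
  done.
have gm : forall z, m <= g z.
  move=> z; rewrite /g indE; case zA: (z \in A) => /=.
    have := Hmin z zA; rewrite /c; lra.
  by rewrite mulr0 subr0.
have cg : (#|[set x : V | (m < g x)%R]| <= n)%N.
  rewrite -ltnS; apply: leq_trans cf; apply: proper_card; apply/properP; split.
    apply/subsetP => z; rewrite inE; apply: contraLR => zA.
    by rewrite -leNgt /g indE (negbTE zA) mulr0 subr0 (notA z zA).
  exists x1 => //; rewrite inE -leNgt /g indE x1A /= mulr1 /c; lra.
have IHg := IH g m gm cg.
have HW : W11norm e nu f = W11norm e nu g + c * W11norm e nu (indicator R A).
  apply: W_split => u v euv; rewrite /g !indE.
  case uA: (u \in A); case vA: (v \in A) => /=.
  - have -> : f v - c * 1%:R - (f u - c * 1%:R) = f v - f u by lra.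
    by rewrite subrr normr0 mulr0 addr0.
  - have hu := Hmin u uA; rewrite (notA v (negbT vA)).
    rewrite ler0_norm; last by lra.
    rewrite ler0_norm; last by rewrite /c; lra.
    rewrite sub0r normrN normr1 mulr1 /c; lra.
  - have hv := Hmin v vA; rewrite (notA u (negbT uA)).
    rewrite ger0_norm; last by lra.
    rewrite ger0_norm; last by rewrite /c; lra.
    rewrite subr0 normr1 mulr1 /c; lra.
  - by rewrite !mulr0 !subr0 normr0 mulr0 addr0.
have Hf : f = (fun z => g z + c * indicator R A z).
  by apply: functional_extensionality => z; rewrite /g subrK.
rewrite HW {1}Hf; apply: le_trans (Hadd _ _) _.
rewrite Hhom (ger0_norm c0) mulrDr; apply: lerD => //.
by rewrite mulrCA; apply: ler_wpM2l.
Qed.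

Theorem theorem2p3 (R : realFieldType) (V : finType) (e : rel V)
  (nu : V -> V -> R) (N : (V -> R) -> R) (C : R) :
  graph_connected e ->
  (forall u v, e u v -> 0 < nu u v) ->
  seminorm N ->
  N (indicator R [set: V]) = 0 ->
  0 <= C ->
  (forall A : {set V}, simply_connected e A ->
     N (indicator R A) <= C * W11norm e nu (indicator R A)) ->
  forall f : V -> R, N f <= C * W11norm e nu f.
Proof.
move=> Gc Hnu Hs N1 C0 Hsc f.
have Hset : forall A : {set V}, N (indicator R A) <= C * W11norm e nu (indicator R A).
  by move=> A; apply: (set_case (n := #|A|) Gc Hs N1 Hsc).
apply: (func_case (n := #|V|) Hnu Hs N1 C0 Hset (m := - \sum_x `|f x|)).
  move=> x; rewrite lerNl.
  apply: le_trans (ler_norm _) _.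
  rewrite normrN.
  by rewrite (bigD1 x) //= lerDl; apply: sumr_ge0 => i _.
exact: max_card.
Qed.
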